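(* Let $A$ be an abelian group. The set $IE(A)$ of all inertial endomorphisms of $A$ is a subring of the endomorphism ring $E(A)$, and it contains the set $F(A)$ of all endomorphisms of $A$ with finite image, which is an ideal of $IE(A)$.
   Context: Abelian groups are written additively. An endomorphism $\varphi$ of an abelian group $A$ is called inertial if for every subgroup $X\le A$ the quotient $(\varphi(X)+X)/X$ is finite. *)

(* Defs.v *)
From mathcomp Require Import all_boot all_algebra.
Set Implicit Arguments. Unset Strict Implicit. Unset Printing Implicit Defensive.
Import GRing.Theory.
Local Open Scope ring_scope.

Section Inertial.
Variable A : zmodType.

Definition endo (f : A -> A) : Prop := forall x y, f (x - y) = f x - f y.

Definition subgroup (X : A -> Prop) : Prop :=
  X 0 /\ forall x y, X x -> X y -> X (x - y).

Definition img_plus (f : A -> A) (X : A -> Prop) : A -> Prop :=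
  fun z => exists x y, X x /\ X y /\ z = f x + y.

(* Y/X is finite (X <= Y): finitely many elements of Y represent all cosets of X in Y *)
Definition finite_quotient (Y X : A -> Prop) : Prop :=
  exists s : seq A, (forall y, y \in s -> Y y) /\
    forall z, Y z -> exists2 y, y \in s & X (z - y).

Definition inertial (f : A -> A) : Prop :=
  forall X, subgroup X -> finite_quotient (img_plus f X) X.

Definition IE (f : A -> A) : Prop := endo f /\ inertial f.

Definition finite_image (f : A -> A) : Prop := exists s : seq A, forall x, f x \in s.

Definition FE (f : A -> A) : Prop := endo f /\ finite_image f.

End Inertial.

(* Main.v *)
Require Import Defs.
From mathcomp Require Import all_boot all_algebra.
From Stdlib Require Import Classical.
Set Implicit Arguments. Unset Strict Implicit. Unset Printing Implicit Defensive.
Import GRing.Theory.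
Local Open Scope ring_scope.

Section Aux.
Variable A : zmodType.
Implicit Types (f g : A -> A) (X Y : A -> Prop).

Definition wfq Y X := exists s : seq A,
  forall z, Y z -> exists2 y, y \in s & X (z - y).

Lemma sg_add X x y : subgroup X -> X x -> X y -> X (x + y).
Proof.
move=> [X0 XB] Hx Hy.
have Hn : X (- y) by rewrite -sub0r; apply: XB.
by rewrite -[y]opprK; apply: XB.
Qed.

Lemma wfq_fq Y X : subgroup X -> wfq Y X -> finite_quotient Y X.
Proof.
move=> HX [s Hs].
elim: s Y Hs => [|a s IH] Y Hs.
  exists [::]; split => // z /Hs [y]; by rewrite in_nil.
pose Y' := fun z => Y z /\ ~ X (z - a).
have [t [Ht1 Ht2]] : finite_quotient Y' X.
  apply: IH => z [Yz nX]; have [y] := Hs z Yz.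
  rewrite in_cons => /orP [/eqP ->|ys] Xz; first by [].
  by exists y.
case: (classic (exists z0, Y z0 /\ X (z0 - a))) => [[z0 [Yz0 Xz0]]|nE].
  exists (z0 :: t); split.
    move=> y; rewrite in_cons => /orP [/eqP ->|/Ht1 []] //.
  move=> z Yz; case: (classic (X (z - a))) => Xza.
    exists z0; first by rewrite mem_head.
    have -> : z - z0 = (z - a) - (z0 - a).
      by rewrite opprB addrA subrK.
    by apply (proj2 HX).
  have [y yt Xy] := Ht2 z (conj Yz Xza).
  by exists y => //; rewrite in_cons yt orbT.
exists t; split; first by move=> y /Ht1 [].
move=> z Yz; case: (classic (X (z - a))) => Xza.
  by exfalso; apply: nE; exists z.
exact: Ht2.
Qed.

Lemma endo0 f : endo f -> f 0 = 0.
Proof. by move=> hf; have := hf 0 0; rewrite !subrr. Qed.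

Lemma sub_sub4 (a b c d : A) : a - b - (c - d) = a - c - (b - d).
Proof. by rewrite !opprB addrACA [RHS]addrACA (addrC (-b)). Qed.

End Aux.

Theorem mainTheorem1 (A : zmodType) :
  (* IE(A) is a subring of E(A) *)
  (IE (fun _ : A => 0) /\ IE (fun x : A => x) /\
   (forall f g : A -> A, IE f -> IE g -> IE (fun x => f x - g x)) /\
   (forall f g : A -> A, IE f -> IE g -> IE (fun x => f (g x)))) /\
  (* F(A) is contained in IE(A) *)
  (forall f : A -> A, FE f -> IE f) /\
  (* F(A) is an ideal of IE(A) *)
  (FE (fun _ : A => 0) /\
   (forall f g : A -> A, FE f -> FE g -> FE (fun x => f x - g x)) /\
   (forall f g : A -> A, IE f -> FE g ->
      FE (fun x => f (g x)) /\ FE (fun x => g (f x)))).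
Proof.
split; [split; [|split; [|split]]|split; [|split; [|split]]].
- split; first by move=> x y; rewrite subrr.
  move=> X HX; apply: wfq_fq => //; exists [:: 0] => z [x [y [_ [Hy ->]]]].
  by exists 0; rewrite ?mem_head // add0r subr0.
- split; first by [].
  move=> X HX; apply: wfq_fq => //; exists [:: 0] => z [x [y [Hx [Hy ->]]]].
  by exists 0; rewrite ?mem_head // subr0; apply: sg_add.
- move=> f g [ef If] [eg Ig]; split.
    by move=> x y; rewrite ef eg sub_sub4.
  move=> X HX; apply: wfq_fq => //.
  have [s [_ Hs]] := If X HX; have [t [_ Ht]] := Ig X HX.
  exists [seq a - b | a <- s, b <- t] => z [x [y [Hx [Hy ->]]]].
  have X0 := HX.1.
  have [a as_ Xa] := Hs (f x + 0) (ex_intro _ x (ex_intro _ 0 (conj Hx (conj X0 erefl)))).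
  have [b bt Xb] := Ht (g x + 0) (ex_intro _ x (ex_intro _ 0 (conj Hx (conj X0 erefl)))).
  exists (a - b); first exact: (allpairs_f (fun a b => a - b) as_ bt).
  rewrite addr0 in Xa; rewrite addr0 in Xb.
  have -> : f x - g x + y - (a - b) = (f x - a - (g x - b)) + y.
    by rewrite -sub_sub4 addrAC.
  apply: sg_add => //; exact: (proj2 HX _ _ Xa Xb).
- move=> f g [ef If] [eg Ig]; split.
    by move=> x y; rewrite eg ef.
  move=> X HX; apply: wfq_fq => //.
  pose Y := img_plus g X.
  have HY : subgroup Y.
    split; first by exists 0, 0; rewrite (endo0 eg) addr0; split; [apply (proj1 HX)|split; [apply (proj1 HX)|]].
    move=> _ _ [x1 [y1 [H1 [H2 ->]]]] [x2 [y2 [H3 [H4 ->]]]].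
    exists (x1 - x2), (y1 - y2); split; first by apply: (proj2 HX).
    split; first by apply: (proj2 HX).
    by rewrite eg opprD addrACA.
  have [s [_ Hs]] := Ig X HX; have [t [_ Ht]] := If Y HY.
  exists [seq a + b | a <- t, b <- s] => z [x [y [Hx [Hy ->]]]].
  have Ygx : Y (g x) by exists x, 0; rewrite addr0; split=> //; split=> //; apply (proj1 HX).
  have Yy : Y y by exists 0, y; rewrite (endo0 eg) add0r; split=> //; apply (proj1 HX).
  have [a at_ Ya] := Ht (f (g x) + y) (ex_intro _ (g x) (ex_intro _ y (conj Ygx (conj Yy erefl)))).
  have [b bs Xb] := Hs _ Ya.
  exists (a + b); first exact: (allpairs_f (fun a b => a + b) at_ bs).
  by rewrite opprD addrA.
- move=> f [ef [s Hs]]; split => //.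
  move=> X HX; apply: wfq_fq => //; exists s => z [x [y [Hx [Hy ->]]]].
  by exists (f x) => //; rewrite addrAC subrr add0r.
- split; first by move=> x y; rewrite subrr.
  by exists [:: 0] => x; rewrite mem_head.
- move=> f g [ef [s Hs]] [eg [t Ht]]; split.
    by move=> x y; rewrite ef eg sub_sub4.
  by exists [seq a - b | a <- s, b <- t] => x; exact: (allpairs_f (fun a b => a - b) (Hs x) (Ht x)).
- move=> f g [ef _] [eg [s Hs]]; split; split.
  + by move=> x y /=; rewrite eg ef.
  + exists (map f s) => x; exact: (map_f f (Hs x)).
  + by move=> x y /=; rewrite ef eg.
  + exists s => x; exact: Hs.
Qed.
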